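(* Let $K$ be a field of characteristic zero, $n\ge 1$, and $M=\mathrm{Mat}(n,K)$. Let $U\subset \mathrm{GL}(n,K)$ be the group of upper triangular matrices with all diagonal entries equal to $1$, acting on the polynomial ring $K[M]$ by $(\rho_g f)(A)=f(g^{-1}Ag)$. For every $1\le k\le n$ and $0\le i\le k-1$, the polynomial $J_{k,i}\in K[M]$ (defined in the context) is $U$-invariant, i.e. $\rho_u J_{k,i}=J_{k,i}$ for all $u\in U$.
   Context: Let $\{x_{ij}\}_{1\le i,j\le n}$ be the standard coordinate functions on $M$, let $X=(x_{ij})$ be the generic matrix and $X^*=(x^*_{ij})$ its adjugate matrix, so $XX^*=X^*X=\det X\cdot E$ (entries of $X^*$ are polynomials in the $x_{ij}$). For $1\le k\le n$ and $0\le i\le k-1$, $J_{k,i}$ is the determinant of the $k\times k$ matrix whose first $k-i$ rows are the rows $n-k+i+1,\dots,n$ of $X$ restricted to columns $1,\dots,k$, and whose last $i$ rows are the rows $n-i+1,\dots,n$ of $X^*$ restricted to columns $1,\dots,k$. In particular $J_{k,0}$ is the lower-left corner $k\times k$ minor of $X$ (rows $n-k+1,\dots,n$, columns $1,\dots,k$). *)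

(* Defs.v *)
From HB Require Import structures.
From mathcomp Require Import all_boot all_order all_algebra.
From mathcomp Require Import mpoly.
Set Implicit Arguments. Unset Strict Implicit. Unset Printing Implicit Defensive.
Import Order.TTheory GRing.Theory.
Local Open Scope ring_scope.

(* K[M] := {mpoly K[n*n]}; the variable 'X_(mxvec_index i j) is x_{ij}. *)
Section Generic.
Variables (K : fieldType) (n : nat).

Definition coordring := {mpoly K[n * n]}.

Definition genmx : 'M[coordring]_n := vec_mx (\row_k 'X_k).

Definition genadj : 'M[coordring]_n := \adj genmx.

Definition entry (A : 'M[coordring]_n) (a b : nat) : coordring :=
  match insub a, insub b with
  | Some i, Some j => A i j
  | _, _ => 0
  end.

(* J_{k,i}: rows n-k+i+1..n of X then rows n-i+1..n of X^* (1-indexed),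
   columns 1..k; here 0-indexed. *)
Definition J (k i : nat) : coordring :=
  \det (\matrix_(r < k, c < k)
          if (r < k - i)%N then entry genmx (n - k + i + r) c
          else entry genadj (n - i + (r - (k - i))) c).

(* the action (rho_g f)(A) = f(g^{-1} A g): substitute x_ij by (g^{-1} X g)_ij *)
Definition rho (g : 'M[K]_n) (f : coordring) : coordring :=
  let S := map_mx (fun c => c%:MP) (invmx g) *m genmx *m map_mx (fun c => c%:MP) g in
  f \mPo [tuple mxvec S 0 k | k < n * n].

Definition unitriangular (u : 'M[K]_n) : Prop :=
  (forall i j : 'I_n, (j < i)%N -> u i j = 0) /\ (forall i : 'I_n, u i i = 1).

End Generic.

(* Main.v *)
Require Import Defs.
From HB Require Import structures.
From mathcomp Require Import all_boot all_order all_algebra.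
From mathcomp Require Import mpoly.
From mathcomp Require Import zify.
Import GRing.Theory.
Local Open Scope ring_scope.

Section Main.
Variables (K : fieldType) (n : nat).
Local Notation R := (coordring K n).
Local Notation ent := (@entry K n).

Lemma entry_ord (A : 'M[R]_n) (a b : 'I_n) : ent A a b = A a b.
Proof. by rewrite /entry !valK. Qed.

Lemma entry_out (A : 'M[R]_n) a b : ~~ ((a < n) && (b < n))%N -> ent A a b = 0.
Proof.
move=> h; rewrite /entry; case: insubP => [i Hi _|] //; case: insubP => [j Hj _|] //.
by rewrite Hi Hj in h.
Qed.

Lemma entry_mul (A B : 'M[R]_n) a b : (a < n)%N -> (b < n)%N ->
  ent (A *m B) a b = \sum_(0 <= s < n) ent A a s * ent B s b.
Proof.
move=> Ha Hb.
have -> : a = Ordinal Ha by [].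
have -> : b = Ordinal Hb by [].
rewrite entry_ord mxE big_mkord; apply: eq_bigr => s _; by rewrite !entry_ord.
Qed.

Definition uut (V : 'M[R]_n) :=
  (forall a b : nat, (b < a)%N -> ent V a b = 0) /\
  (forall a, (a < n)%N -> ent V a a = 1).

Definition rr k i r := if (r < k - i)%N then (n - k + i + r)%N else (n - i + (r - (k - i)))%N.
Definition sel (A B : 'M[R]_n) k i r := if (r < k - i)%N then A else B.
Definition Jm A B k i : 'M[R]_k :=
  \matrix_(r < k, c < k) ent (sel A B k i r) (rr k i r) c.

Lemma JmE A B k i :
  (\matrix_(r < k, c < k)
          if (r < k - i)%N then entry A (n - k + i + r) c
          else entry B (n - i + (r - (k - i))) c) = Jm A B k i.
Proof. by apply/matrixP => r c; rewrite !mxE /sel /rr; case: ifP. Qed.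

Lemma sum_shift (a b m : nat) (F : nat -> R) : b = (a + m)%N ->
  \sum_(a <= s < b) F s = \sum_(0 <= t < m) F (a + t)%N.
Proof.
move=> ->; rewrite -{1}(add0n a) big_addn. rewrite addKn.
by apply: eq_bigr => t _; rewrite addnC.
Qed.


Lemma rr_lt k i r : (k <= n)%N -> (i <= k)%N -> (r < k)%N -> (rr k i r < n)%N.
Proof. rewrite /rr; case: ifP => ? ? ? ?; lia. Qed.

Lemma Jm_right (A B W : 'M[R]_n) k i : (k <= n)%N -> (i <= k)%N ->
  uut W ->
  Jm (A *m W) (B *m W) k i = Jm A B k i *m \matrix_(r < k, c < k) ent W r c.
Proof.
move=> Hk Hi [W0 W1]; apply/matrixP => r c; rewrite !mxE.
have -> : sel (A *m W) (B *m W) k i r = sel A B k i r *m W by rewrite /sel; case: ifP.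
have Hc : (c < n)%N by apply: leq_trans (ltn_ord c) Hk.
rewrite entry_mul ?rr_lt // (@big_cat_nat _ _ _ k) //=.
rewrite [X in _ + X]big1_seq ?addr0; last first.
  move=> s /andP[_]; rewrite mem_index_iota => /andP[Hs _].
  by rewrite W0 ?mulr0 //; apply: leq_trans (ltn_ord c) Hs.
rewrite big_mkord; apply: eq_bigr => s _; by rewrite !mxE.
Qed.

Lemma sel_mulL (V A B : 'M[R]_n) k i r : sel (V *m A) (V *m B) k i r = V *m sel A B k i r.
Proof. by rewrite /sel; case: ifP. Qed.

Lemma vil k (r : 'I_k) s : (s < k)%N -> val (insubd r s) = s.
Proof. by move=> h; rewrite val_insubd h. Qed.

Definition Lm (V : 'M[R]_n) k i : 'M[R]_k :=
  \matrix_(r < k, r' < k) if ((r < k - i)%N == (r' < k - i)%N) then ent V (rr k i r) (rr k i r') else 0.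

Lemma Jm_left (A B V : 'M[R]_n) k i : (k <= n)%N -> (i <= k)%N ->
  uut V ->
  Jm (V *m A) (V *m B) k i = Lm V k i *m Jm A B k i.
Proof.
move=> Hk Hi [V0 V1]; apply/matrixP => r c.
rewrite !mxE.
rewrite sel_mulL.
have Hc : (c < n)%N by apply: leq_trans (ltn_ord c) Hk.
have Hr := ltn_ord r.
rewrite entry_mul ?rr_lt //.
set F := (fun r' : nat => (Lm V k i) r (insubd r r') * (Jm A B k i) (insubd r r') c).
have -> : \sum_(j < k) Lm V k i r j * Jm A B k i j c = \sum_(j < k) F j.
  by apply: eq_bigr => j _; rewrite /F valKd.
rewrite -(big_mkord xpredT F) /F.
case: (ltnP r (k - i)) => Hri.
- rewrite (@big_cat_nat _ _ _ (n - k + i)) /=; [|lia|lia].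
  rewrite big1_seq ?add0r; last first.
    move=> s /andP[_]; rewrite mem_index_iota => /andP[_ Hs].
    by rewrite V0 ?mul0r // /rr Hri; lia.
  rewrite [RHS](@big_cat_nat _ _ _ (k - i)) /=; [|lia|lia].
  rewrite [X in _ = _ + X]big1_seq ?addr0; last first.
    move=> s /andP[_]; rewrite mem_index_iota => /andP[Hs1 Hs2].
    rewrite !mxE vil // Hri ltnNge Hs1 /=. by rewrite mul0r.
  rewrite (@sum_shift (n - k + i) n (k - i)); last lia.
  apply: eq_big_nat => t /andP[_ Ht].
  rewrite !mxE vil; last lia.
  by rewrite Hri Ht /sel /rr Hri Ht.
- have Hri' : (r < k - i)%N = false by rewrite ltnNge Hri.
  rewrite (@big_cat_nat _ _ _ (n - i)) /=; [|lia|lia].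
  rewrite big1_seq ?add0r; last first.
    move=> s /andP[_]; rewrite mem_index_iota => /andP[_ Hs].
    by rewrite V0 ?mul0r // /rr Hri' /=; lia.
  rewrite [RHS](@big_cat_nat _ _ _ (k - i)) /=; [|lia|lia].
  rewrite [X in _ = X + _]big1_seq ?add0r; last first.
    move=> s /andP[_]; rewrite mem_index_iota => /andP[Hs1 Hs2].
    rewrite !mxE vil; last lia.
    by rewrite Hri' Hs2 /= mul0r.
  rewrite (@sum_shift (n - i) n i); last lia.
  rewrite (@sum_shift (k - i) k i); last lia.
  apply: eq_big_nat => t /andP[_ Ht].
  rewrite !mxE vil; last lia.
  rewrite Hri' /sel /rr Hri'.
  have -> : (k - i + t < k - i)%N = false by lia.
  by rewrite addKn.
Qed.


Lemma rr_mono k i (a b : nat) : (i <= k)%N -> (a < b)%N ->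
  ((a < k - i)%N == (b < k - i)%N) -> (rr k i a < rr k i b)%N.
Proof.
move=> Hi Hab; rewrite /rr.
case: (ltnP a (k - i)) => Ha; case: (ltnP b (k - i)) => Hb //= _; lia.
Qed.

Lemma det_Lm V k i : (k <= n)%N -> (i <= k)%N -> uut V -> \det (Lm V k i) = 1.
Proof.
move=> Hk Hi [V0 V1]; rewrite -det_tr det_trig.
  by apply: big1 => r _; rewrite !mxE eqxx V1 // rr_lt.
apply/is_trig_mxP => a b Hab; rewrite !mxE.
by case: ifP => // Hs; rewrite V0 // rr_mono // eq_sym.
Qed.

Lemma det_Wk (W : 'M[R]_n) k : (k <= n)%N -> uut W ->
  \det (\matrix_(r < k, c < k) ent W r c) = 1.
Proof.
move=> Hk [W0 W1]; rewrite -det_tr det_trig.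
  by apply: big1 => r _; rewrite !mxE W1 //; apply: leq_trans (ltn_ord r) Hk.
by apply/is_trig_mxP => a b Hab; rewrite !mxE W0.
Qed.

Lemma Jdet (A B V W : 'M[R]_n) k i : (k <= n)%N -> (i <= k)%N -> uut V -> uut W ->
  \det (Jm (V *m A *m W) (V *m B *m W) k i) = \det (Jm A B k i).
Proof.
move=> Hk Hi HV HW.
rewrite Jm_right // Jm_left // !det_mulmx det_Lm // det_Wk //.
by rewrite mul1r mulr1.
Qed.


Lemma entry_nat (A : 'M[R]_n) a b (Ha : (a < n)%N) (Hb : (b < n)%N) :
  ent A a b = A (Ordinal Ha) (Ordinal Hb).
Proof. exact: (entry_ord A (Ordinal Ha) (Ordinal Hb)). Qed.

Lemma det_unitri (u : 'M[K]_n) : unitriangular u -> \det u = 1.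
Proof.
move=> [U0 U1]; rewrite -det_tr det_trig.
  by apply: big1 => r _; rewrite !mxE U1.
by apply/is_trig_mxP => a b Hab; rewrite !mxE U0.
Qed.

Lemma inv_unitri (u : 'M[K]_n) : unitriangular u -> unitriangular (invmx u).
Proof.
move=> Hu; have [U0 U1] := Hu.
have uU : u \in unitmx by rewrite unitmxE det_unitri // unitr1.
have WU := mulVmx uU. set W := invmx u in WU *.
have H0 : forall i j : 'I_n, (j < i)%N -> W i j = 0.
  move=> i.
  have: forall m (j : 'I_n), (j < m)%N -> (j < i)%N -> W i j = 0.
    elim=> [//|m IH] j Hjm Hji.
    have := congr1 (fun M : 'M[K]_n => M i j) WU.
    rewrite !mxE (bigD1 j) //= U1 mulr1.
    rewrite big1 ?addr0; last first.
      move=> s Hs; case: (ltngtP s j) => h.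
      - by rewrite IH ?mul0r //; lia.
      - by rewrite U0 ?mulr0.
      - by move: Hs; rewrite (ord_inj h) eqxx.
    move=> ->; have : i != j by rewrite -(inj_eq val_inj) /=; lia.
    by move/negbTE => ->.
  by move=> H j Hj; apply: (H j.+1).
split => // i.
have := congr1 (fun M : 'M[K]_n => M i i) WU.
rewrite !mxE (bigD1 i) //= U1 mulr1.
rewrite big1 ?addr0 ?eqxx //.
move=> s Hs; case: (ltngtP s i) => h.
- by rewrite H0 ?mul0r.
- by rewrite U0 ?mulr0.
- by move: Hs; rewrite (ord_inj h) eqxx.
Qed.

Lemma uut_map (M : 'M[K]_n) : unitriangular M -> uut (map_mx (fun c => c%:MP) M).
Proof.
move=> [M0 M1]; split => [a b Hab|a Ha].
  case: (ltnP a n) => Ha; last first.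
    by rewrite entry_out // negb_and -leqNgt Ha.
  have Hb : (b < n)%N by lia.
  by rewrite (entry_nat _ _ _ Ha Hb) mxE M0 // rmorph0.
by rewrite (entry_nat _ _ _ Ha Ha) mxE M1 rmorph1.
Qed.


Lemma genmxE (a b : 'I_n) : (Defs.genmx K n) a b = 'X_(mxvec_index a b).
Proof. by rewrite /Defs.genmx /vec_mx !mxE. Qed.

Lemma detX_neq0 : \det ((Defs.genmx K n)) != 0.
Proof.
set v := fun m : 'I_(n * n) => mxvec (1%:M : 'M[K]_n) 0 m.
apply/eqP => h; have := congr1 (meval v) h.
rewrite -det_map_mx rmorph0.
have -> : map_mx (meval v) ((Defs.genmx K n)) = 1%:M.
  by apply/matrixP => a b; rewrite mxE genmxE mevalXU /v mxvecE.
by rewrite det1 => /eqP; rewrite oner_eq0.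
Qed.

Lemma entry_map (f : {rmorphism R -> R}) (A : 'M[R]_n) a b :
  f (ent A a b) = ent (map_mx f A) a b.
Proof.
rewrite /entry; case: insub => [x|]; last exact: rmorph0.
case: insub => [y|]; last exact: rmorph0.
by rewrite mxE.
Qed.

Lemma Jm_map (f : {rmorphism R -> R}) A B k i :
  map_mx f (Jm A B k i) = Jm (map_mx f A) (map_mx f B) k i.
Proof.
apply/matrixP => r c; rewrite !mxE entry_map /sel; by case: ifP.
Qed.

Lemma adj_conj (u : 'M[K]_n) : unitriangular u ->
  \adj (map_mx (fun c => c%:MP) (invmx u) *m (Defs.genmx K n) *m map_mx (fun c => c%:MP) u)
  = map_mx (fun c => c%:MP) (invmx u) *m (genadj K n) *m map_mx (fun c => c%:MP) u.
Proof.
move=> Hu.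
have uU : u \in unitmx by rewrite unitmxE det_unitri // unitr1.
set V := map_mx _ (invmx u); set W := map_mx _ u.
set X := (Defs.genmx K n); set S := V *m X *m W.
have WV : W *m V = 1%:M by rewrite /W /V -map_mxM mulmxV // map_mx1.
have VW : V *m W = 1%:M by rewrite /W /V -map_mxM mulVmx // map_mx1.
have dV : \det V = 1 by rewrite /V det_map_mx det_inv det_unitri // invr1 rmorph1.
have dW : \det W = 1 by rewrite /W det_map_mx det_unitri // rmorph1.
set d := \det X.
have dS : \det S = d by rewrite !det_mulmx dV dW mul1r mulr1.
set T := V *m (genadj K n) *m W.
have h1 : \adj S *m S = d%:M by rewrite mul_adj_mx dS.
have h2 : T *m S = d%:M.
  rewrite /T /S /genadj -!mulmxA (mulmxA W V) WV mul1mx (mulmxA (\adj X) X).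
  by rewrite mul_adj_mx mul_scalar_mx -scalemxAr VW scalemx1.
have h3 : (\adj S - T) *m S = 0 by rewrite mulmxBl h1 h2 subrr.
have h4 : d *: (\adj S - T) = 0.
  by rewrite -mul_mx_scalar -dS -mul_mx_adj mulmxA h3 mul0mx.
apply/eqP; rewrite -subr_eq0; apply/eqP/matrixP => a b.
have := congr1 (fun M : 'M[R]_n => M a b) h4; rewrite !mxE => /eqP.
by rewrite mulf_eq0 (negbTE detX_neq0) /= => /eqP.
Qed.

End Main.

Theorem proposition1 (K : fieldType) (n : nat) :
  [pchar K] =i pred0 -> (1 <= n)%N ->
  forall (k i : nat), (1 <= k)%N -> (k <= n)%N -> (i <= k - 1)%N ->
  forall u : 'M[K]_n, unitriangular u ->
  rho u (J K n k i) = J K n k i.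
Proof.
move=> _ Hn k i Hk1 Hkn Hik u Hu.
have Hi : (i <= k)%N by lia.
pose S : 'M[coordring K n]_n := map_mx (fun c => c%:MP) (invmx u) *m Defs.genmx K n *m map_mx (fun c => c%:MP) u.
pose t := [tuple mxvec S 0 j | j < n * n].
have -> : rho u (J K n k i) = comp_mpoly t (J K n k i) by [].
rewrite /J JmE -det_map_mx Jm_map.
have XS : map_mx (comp_mpoly t) (Defs.genmx K n) = S.
  apply/matrixP => a b.
  by rewrite mxE genmxE comp_mpolyXU -(tnth_nth 0) tnth_mktuple mxvecE.
rewrite XS /genadj map_mx_adj XS adj_conj // Jdet //.
  by apply: uut_map; apply: inv_unitri.
by apply: uut_map.
Qed.
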